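(* Let $y\ge 1$ be an integer and $s\ge 0$ an integer. Consider the random walk on $\mathbb{Z}$ starting at $s$ whose steps are independent and equal to $+y$ or $-2$, each with probability $\tfrac12$, stopped at the first time it enters $\{0,1\}$ (if $s\in\{0,1\}$ it is stopped at time $0$). For $j\ge 0$ let $q_j(s)$ be the probability that the walk is eventually absorbed in $\{0,1\}$ having made exactly $j$ steps equal to $-2$, and let $F_s(z)=\sum_{j\ge 0}q_j(s)z^j$. Let $a=a(z)$ and $b=b(z)$ be the two roots of $x^{y+2}-2x^2+z=0$ that tend to $0$ as $z\to 0$ (the ''small roots''). Then, for $z$ sufficiently small, $$F_s(z)=\frac{(1-b)\,a^s+(a-1)\,b^s}{a-b}.$$ In particular, for $s=2$ this equals $a+b-ab$.
   Context: For $|z|$ small and positive the polynomial $x^{y+2}-2x^2+z$ has exactly two roots of modulus tending to $0$ as $z\to0$ (both of order $\sqrt{z/2}$). The other $y$ roots stay bounded away from $0$. The right-hand side is symmetric in $a$ and $b$. *)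

(* Defs.v *)
From HB Require Import structures.
From mathcomp Require Import all_boot all_order all_algebra.
From mathcomp Require Import all_classical all_reals all_analysis.
From mathcomp Require Import complex.
Set Implicit Arguments. Unset Strict Implicit. Unset Printing Implicit Defensive.
Import Order.TTheory GRing.Theory Num.Theory.
Import numFieldNormedType.Exports.
Local Open Scope ring_scope.

HB.instance Definition _ (R : rcfType) := PseudoPointedMetric.copy R[i] (R[i])^o.
HB.instance Definition _ (R : rcfType) := NormedModule.copy R[i] (R[i])^o.

(* A path of the walk is a finite word of steps: true = step +y, false = step -2. *)
Definition walk_pos (y s : nat) (w : seq bool) (i : nat) : int :=
  (s%:Z + (y%:Z) * (count id (take i w))%:Z - 2 * (count negb (take i w))%:Z)%R.

Definition in01 (x : int) : bool := (x == 0) || (x == 1).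

Definition absorbed_exactly_at (y s n : nat) (w : n.-tuple bool) : bool :=
  [forall i : 'I_n, ~~ in01 (walk_pos y s w i)] && in01 (walk_pos y s w n).

(* q_j(s): probability that the walk (independent fair steps +y / -2) started at s
   is absorbed in {0,1} having made exactly j steps equal to -2.  The event is the
   disjoint union over the absorption time n of the cylinder sets of the words w
   of length n with first entrance time n and j down-steps, each of probability 2^-n. *)
Definition qprob {R : realType} (y s j : nat) : R :=
  limn (fun N : nat => \sum_(0 <= n < N)
     \sum_(w : n.-tuple bool | absorbed_exactly_at y s w && (count negb w == j))
        (2 ^- n : R)).

Local Open Scope complex_scope.
Definition Fpartial {R : realType} (y s : nat) (z : R[i]) (N : nat) : R[i] :=
  \sum_(0 <= j < N) ((qprob y s j : R)%:C * z ^+ j).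

(* Main.v *)
Require Import Defs.
From HB Require Import structures.
From mathcomp Require Import all_boot all_order all_algebra.
From mathcomp Require Import all_classical all_reals all_analysis.
From mathcomp Require Import complex.
From mathcomp Require Import zify ring lra.
Import Order.TTheory GRing.Theory Num.Theory.
Import numFieldNormedType.Exports.
Local Open Scope ring_scope.

Definition nxt (y s : nat) (b : bool) : nat := if b then (s + y)%N else (s - 2)%N.

Lemma in01_nat (s : nat) : in01 (s%:Z) = (s <= 1)%N.
Proof. rewrite /in01; case: s => [|[|s]] //. Qed.

Lemma walk_pos0 y s (w : seq bool) : walk_pos y s w 0 = s%:Z.
Proof. by rewrite /walk_pos take0 /= mulr0 subr0 addr0. Qed.

Lemma walk_posS y s b (w : seq bool) i : (1 < s)%N || b ->
  walk_pos y s (b :: w) i.+1 = walk_pos y (nxt y s b) w i.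
Proof.
move=> h; rewrite /walk_pos /nxt /=.
case: b h => /= h.
- rewrite !PoszD. lia.
- rewrite add0n PoszD. have -> : Posz (s - 2)%N = s%:Z - 2 by rewrite subzn //; lia. lia.
Qed.

Lemma abs0 y s (w : 0.-tuple bool) : absorbed_exactly_at y s w = (s <= 1)%N.
Proof.
rewrite /absorbed_exactly_at.
have -> : [forall i : 'I_0, ~~ in01 (walk_pos y s w i)] by apply/forallP => -[].
by rewrite (tuple0 w) /= /walk_pos take0 /= mulr0 subr0 addr0 in01_nat.
Qed.

Lemma absS y s n b (t : n.-tuple bool) :
  absorbed_exactly_at y s (cons_tuple b t) = (1 < s)%N && absorbed_exactly_at y (nxt y s b) t.
Proof.
rewrite /absorbed_exactly_at.
case: (leqP s 1) => hs /=.
  apply/negbTE; apply/nandP; left; apply/forallPn; exists ord0.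
  by rewrite walk_pos0 in01_nat hs.
have hsb : (1 < s)%N || b by rewrite hs.
rewrite walk_posS //; congr (_ && _).
apply/forallP/forallP => H i.
  have := H (lift ord0 i); rewrite /= /bump /= add1n walk_posS //.
case: i => [[|i] Hi] /=.
  by rewrite walk_pos0 in01_nat -ltnNge.
rewrite walk_posS //. have Hi' : (i < n)%N by [].
exact: (H (Ordinal Hi')).
Qed.

Lemma sum_tuple_cons (V : nmodType) n (P : pred (n.+1.-tuple bool)) (F : n.+1.-tuple bool -> V) :
  \sum_(w | P w) F w =
  \sum_(b : bool) \sum_(t : n.-tuple bool | P (cons_tuple b t)) F (cons_tuple b t).
Proof.
rewrite pair_big_dep /=.
rewrite (reindex (fun p : bool * n.-tuple bool => cons_tuple p.1 p.2)) /=.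
  by [].
exists (fun w => (thead w, behead_tuple w)) => [[b t] _|w _] /=.
  rewrite theadE; congr (_, _); exact: val_inj.
by rewrite {3}(tuple_eta w); apply: val_inj.
Qed.

Definition ct {R : realType} (y s n j : nat) : R :=
  \sum_(w : n.-tuple bool | absorbed_exactly_at y s w && (count negb w == j)) (2 ^- n : R).

Lemma ct0 (R : realType) y s j : ct y s 0 j = (if (s <= 1)%N && (j == 0)%N then 1 else 0 : R).
Proof.
rewrite /ct (eq_bigl (fun _ => (s <= 1)%N && (j == 0)%N)); last first.
  by move=> w; rewrite abs0 (tuple0 w) /= eq_sym.
case: ifP => _; last by rewrite big_pred0.
by rewrite sumr_const card_tuple card_bool expn0 expr0 invr1.
Qed.

Lemma ctS (R : realType) y s n j : ct y s n.+1 j =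
  (if (s <= 1)%N then 0 else
     (ct y (s + y) n j + (if j is j'.+1 then ct y (s - 2) n j' else 0)) / 2 : R).
Proof.
rewrite /ct sum_tuple_cons big_bool /=.
case: (leqP s 1) => hs.
  by rewrite !big_pred0 ?addr0 // => t; rewrite absS ltnNge hs.
rewrite mulrDl; congr (_ + _).
  rewrite mulr_suml; apply: eq_big => [t|t _].
    by rewrite absS hs /= add0n.
  by rewrite exprS invfM mulrC.
case: j => [|j].
  by rewrite big_pred0 ?mul0r // => t; rewrite andbC.
rewrite mulr_suml; apply: eq_big => [t|t _].
  by rewrite absS hs /= add1n eqSS.
by rewrite exprS invfM mulrC.
Qed.

Lemma ct_bnd (R : realType) y n : forall s j, 0 <= (ct y s n j : R) <= 1.
Proof.
elim: n => [|n IH] s j.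
  by rewrite ct0; case: ifP => _; rewrite ?lexx ?ler01.
rewrite ctS; case: ifP => _; first by rewrite lexx ler01.
have := IH (s + y)%N j; case: j => [|j]; last have := IH (s - 2)%N j; lra.
Qed.

Lemma ct_eq0 (R : realType) y n : forall s j,
  ((y * n + s > (y + 2) * j + 1)%N || (j > n)%N) -> (ct y s n j : R) = 0.
Proof.
elim: n => [|n IH] s j.
  rewrite ct0; case: ifP => // /andP[h1 /eqP h2]; lia.
move=> h; rewrite ctS; case: ifP => // hs.
rewrite IH; last by lia.
case: j h => [|j] h; first by rewrite addr0 mul0r.
rewrite IH; last by lia.
by rewrite addr0 mul0r.
Qed.

Lemma qprobE (R : realType) y s j : (1 <= y)%N ->
  (qprob y s j : R) = \sum_(0 <= n < 3 * j + 2) ct y s n j.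
Proof.
move=> hy.
transitivity (limn (fun N => \sum_(0 <= n < N) (ct y s n j : R))); first by [].
apply: cvg_lim => //; apply: cvg_near_cst.
exists (3 * j + 2)%N => // N /= hN.
rewrite (big_cat_nat (n := (3 * j + 2)%N) (leq0n _) hN) /=.
rewrite [X in _ + X](_ : _ = 0) ?addr0 //.
rewrite big_nat_cond big1 // => n /andP[/andP[hn _] _].
apply: ct_eq0; apply/orP; left; nia.
Qed.
Fixpoint Arec {F : numFieldType} (y : nat) (r z : F) (n s : nat) : F :=
  match n with
  | 0 => if (s <= 1)%N then r ^+ s else 0
  | n'.+1 => if (s <= 1)%N then 0 else (Arec y r z n' (s + y) + z * Arec y r z n' (s - 2)) / 2
  end.
Fixpoint Srec {F : numFieldType} (y : nat) (r z : F) (n s : nat) : F :=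
  match n with
  | 0 => if (s <= 1)%N then 0 else r ^+ s
  | n'.+1 => if (s <= 1)%N then 0 else (Srec y r z n' (s + y) + z * Srec y r z n' (s - 2)) / 2
  end.
Fixpoint Hrec {F : numFieldType} (y : nat) (z : F) (n s : nat) : F :=
  match n with
  | 0 => if (s <= 1)%N then 1 else 0
  | n'.+1 => if (s <= 1)%N then 0 else (Hrec y z n' (s + y) + z * Hrec y z n' (s - 2)) / 2
  end.

Lemma mart (F : numFieldType) y (r z : F) : r ^+ (y + 2) - 2 * r ^+ 2 + z = 0 ->
  forall N s, \sum_(n < N.+1) Arec y r z n s + Srec y r z N s = r ^+ s.
Proof.
move=> hr; elim=> [|N IH] s.
  by rewrite big_ord1 /=; case: ifP; rewrite ?addr0 ?add0r.
rewrite big_ord_recl /=.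
case: (leqP s 1) => hs.
  by rewrite big1 ?addr0 // => i _ /=; rewrite hs.
rewrite add0r.
under eq_bigr => i _ do rewrite add0n.
rewrite -mulr_suml big_split /= -mulr_sumr -mulrDl.
rewrite addrACA -mulrDr IH IH.
case: s hs => [|[|k]] // _.
have -> : (k.+2 - 2 = k)%N by lia.
have -> : r ^+ (k.+2 + y) = r ^+ k * r ^+ (y + 2) by rewrite -exprD; congr (_ ^+ _); lia.
have -> : r ^+ (y + 2) = 2 * r ^+ 2 - z.
  by apply/eqP; rewrite -subr_eq0; apply/eqP; rewrite -hr; ring.
have -> : r ^+ k.+2 = r ^+ k * r ^+ 2 by rewrite -exprD addn2.
have two : (2 : F) != 0 by rewrite pnatr_eq0.
by field.
Qed.

Lemma Hcomb (F : numFieldType) y (a b z : F) n : forall s,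
  (a - b) * Hrec y z n s = (1 - b) * Arec y a z n s + (a - 1) * Arec y b z n s.
Proof.
elim: n => [|n IH] s /=.
  case: ifP => hs; last by rewrite !mulr0 addr0.
  by case: s hs => [|[|]] //= _; rewrite ?expr0 ?expr1; ring.
case: ifP => _; first by rewrite !mulr0 addr0.
have h1 := IH (s + y)%N; have h2 := IH (s - 2)%N.
have two : (2 : F) != 0 by rewrite pnatr_eq0.
apply/eqP; rewrite -subr_eq0; apply/eqP.
have -> : (a - b) * ((Hrec y z n (s + y) + z * Hrec y z n (s - 2)) / 2) =
  ((a - b) * Hrec y z n (s + y) + z * ((a - b) * Hrec y z n (s - 2))) / 2 by field.
rewrite h1 h2. by field.
Qed.

Lemma Sbound (F : numFieldType) y (r z : F) : (1 <= y)%N ->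
  `|r| <= 2^-1 -> `|z| <= 8^-1 ->
  forall N s, `|Srec y r z N s| <= (2^-1) ^+ (s + N).
Proof.
move=> hy hr hz.
have q0 : (0 : F) <= 2^-1 by rewrite invr_ge0 ler0n.
have q1 : (2^-1 : F) <= 1 by rewrite invf_le1 ?ler1n ?ltr0n.
elim=> [|N IH] s /=.
  case: ifP => _; first by rewrite normr0 exprn_ge0.
  by rewrite addn0 normrX lerXn2r // qualifE /= ?normr_ge0.
case: ifP => hs; first by rewrite normr0 exprn_ge0.
have h1 := IH (s + y)%N; have h2 := IH (s - 2)%N.
rewrite normrM normfV normr_nat.
have hb : `|Srec y r z N (s + y) + z * Srec y r z N (s - 2)| <= 2 * (2^-1) ^+ (s + N + 1).
  apply: le_trans (ler_normD _ _) _.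
  rewrite normrM mulr2n mulrDl mul1r; apply: lerD.
    apply: le_trans h1 _; apply: ler_wiXn2l => //; lia.
  have -> : (2^-1 : F) ^+ (s + N + 1) = 8^-1 * (2^-1) ^+ (s - 2 + N).
    have -> : (s + N + 1 = 3 + (s - 2 + N))%N by lia.
    rewrite exprD; congr (_ * _).
    by rewrite exprVn -natrX.
  apply: ler_pM => //; exact: normr_ge0.
apply: le_trans (ler_wpM2r _ hb) _; first by rewrite invr_ge0 ler0n.
have -> : (s + N.+1 = s + N + 1)%N by lia.
rewrite mulrC mulrA mulVf ?pnatr_eq0 // mul1r; exact: lexx.
Qed.

Local Open Scope complex_scope.

Lemma C2 (R : realType) (x : R) : (x / 2)%:C = x%:C / 2 :> R[i].
Proof. by rewrite rmorphM /= fmorphV /= rmorph_nat. Qed.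

Lemma Hc (R : realType) y (z : R[i]) n : forall s m, (n <= m)%N ->
  Hrec y z n s = \sum_(j < m.+1) (ct y s n j : R)%:C * z ^+ j.
Proof.
elim: n => [|n IH] s m hnm.
  rewrite big_ord_recl big1 => [|j _]; last by rewrite ct0 andbF mul0r.
  by rewrite ct0 andbT /= expr0 mulr1 addr0; case: ifP.
case: m hnm => [|m] // hnm.
rewrite /=; case: ifP => hs.
  by rewrite big1 // => j _; rewrite ctS hs mul0r.
rewrite (eq_bigr (fun j : 'I_m.+2 => ((ct y (s + y) n j : R)%:C * z ^+ j +
   (if (j : nat) is j'.+1 then (ct y (s - 2) n j' : R)%:C else 0) * z ^+ j) / 2)); last first.
  move=> j _; rewrite ctS hs C2 rmorphD.
  by case: (nat_of_ord j) => [|j']; rewrite /= ?rmorph0; ring.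
rewrite -mulr_suml big_split /= -(IH _ m.+1) ?(ltnW hnm) //; congr ((_ + _) / 2).
rewrite big_ord_recl mul0r add0r (IH _ m) // mulr_sumr; apply: eq_bigr => j _.
by rewrite exprS mulrCA.
Qed.

Lemma nat_fact j N : (N <= 3 * j)%N -> ((3 * j + 2) * 4 ^ N <= 2 * 256 ^ j)%N.
Proof.
move=> h.
have h1 : (3 * j + 2 <= 2 * 4 ^ j)%N.
  elim: j {h} => [|j IH] //. rewrite expnS. lia.
have h2 : (4 ^ N <= 64 ^ j)%N.
  have -> : (64 = 4 ^ 3)%N by []. rewrite -expnM. by rewrite leq_exp2l.
have -> : (256 ^ j = 4 ^ j * 64 ^ j)%N by rewrite -expnMn.
rewrite mulnA; apply: leq_mul => //.
Qed.

Lemma num_fact (F : numFieldType) j N : (N <= 3 * j)%N ->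
  (3 * j + 2)%:R * (256^-1 : F) ^+ j <= 2 / (4 ^ N)%:R.
Proof.
move=> h.
rewrite exprVn -natrX ler_pdivlMr ?ltr0n ?expn_gt0 //.
rewrite mulrAC ler_pdivrMr ?ltr0n ?expn_gt0 //.
rewrite -!natrM ler_nat. exact: nat_fact.
Qed.

Lemma term_bound (R : realType) y s (z : R[i]) N j : (1 <= y)%N -> `|z| <= 256^-1 ->
  `|(qprob y s j - \sum_(0 <= n < N.+1) ct y s n j)%:C * z ^+ j| <= 2 / (4 ^ N)%:R.
Proof.
move=> hy hz.
have b0 : (0 : R[i]) <= 2 / (4 ^ N)%:R by rewrite divr_ge0 ?ler0n.
rewrite (qprobE _ _ _ _ hy).
case: (leqP (3 * j + 2) N.+1) => h.
  have -> : \sum_(0 <= n < N.+1) ct y s n j = \sum_(0 <= n < 3 * j + 2) (ct y s n j : R).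
    rewrite (big_cat_nat (n := (3 * j + 2)%N) (leq0n _) h) /=.
    rewrite [X in _ + X](_ : _ = 0) ?addr0 //.
    rewrite big_nat_cond big1 // => n /andP[/andP[hn _] _].
    apply: ct_eq0; apply/orP; left; nia.
  by rewrite subrr (_ : (0:R)%:C = 0) // mul0r normr0.
rewrite (big_cat_nat (n := N.+1) (leq0n _) (ltnW h)) /= addrC addrK.
set e := \sum_(N.+1 <= i < 3 * j + 2) _.
have e0 : 0 <= e by apply: sumr_ge0 => n _; case/andP: (ct_bnd R y n s j).
have e1 : e <= (3 * j + 2)%:R.
  apply: le_trans (_ : \sum_(N.+1 <= i < 3 * j + 2) (1 : R) <= _).
    by apply: ler_sum => n _; case/andP: (ct_bnd R y n s j).
  by rewrite sumr_const_nat ler_nat; lia.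
rewrite normrM normrX ger0_norm ?ler0c //.
have hN : (N <= 3 * j)%N by lia.
apply: le_trans; last exact: (@num_fact _ j N hN).
apply: ler_pM => //; first by rewrite ler0c.
  by rewrite -(rmorph_nat (real_complex R)) lecR.
by apply: lerXn2r => //; rewrite qualifE /= ?invr_ge0 ?ler0n.
Qed.

Lemma diff_bound (R : realType) y s (z : R[i]) N : (1 <= y)%N -> `|z| <= 256^-1 ->
  `|Fpartial y s z N.+1 - \sum_(n < N.+1) Hrec y z n s| <= 2 * (2^-1) ^+ N.
Proof.
move=> hy hz.
have -> : \sum_(n < N.+1) Hrec y z n s =
    \sum_(j < N.+1) (\sum_(0 <= n < N.+1) (ct y s n j : R))%:C * z ^+ j.
  rewrite (eq_bigr (fun n : 'I_N.+1 => \sum_(j < N.+1) (ct y s n j : R)%:C * z ^+ j)); last first.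
    by move=> n _; apply: Hc; rewrite -ltnS.
  rewrite exchange_big /=; apply: eq_bigr => j _.
  by rewrite big_mkord rmorph_sum /= mulr_suml.
rewrite /Fpartial big_mkord -sumrB.
apply: le_trans (ler_norm_sum _ _ _) _.
apply: le_trans (_ : \sum_(j < N.+1) (2 / (4 ^ N)%:R : R[i]) <= _).
  by apply: ler_sum => j _; rewrite -mulrBl -rmorphB; exact: term_bound.
rewrite sumr_const card_ord exprVn -natrX -[_ *+ N.+1]mulr_natr.
rewrite ler_pdivlMr ?ltr0n ?expn_gt0 //.
have -> : (2 / (4 ^ N)%:R * N.+1%:R * (2 ^ N)%:R : R[i]) = (2 * N.+1%:R * (2 ^ N)%:R) / (4 ^ N)%:R by ring.
rewrite ler_pdivrMr ?ltr0n ?expn_gt0 //.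
rewrite -!natrM ler_nat.
have h1 : (N.+1 <= 2 ^ N)%N by apply: ltn_expl.
have -> : (4 ^ N = 2 ^ N * 2 ^ N)%N by rewrite -expnMn.
rewrite -mulnA leq_mul2l /=; exact: leq_mul.
Qed.

Local Open Scope classical_set_scope.

Lemma cvg_bound (R : realType) (u : nat -> R[i]) (L C : R[i]) :
  (forall N, `|u N - L| <= C * (2^-1) ^+ N) -> u @ \oo --> L.
Proof.
move=> hb.
have C0 : 0 <= C.
  have := hb 0%N; rewrite expr0 mulr1; apply: le_trans; exact: normr_ge0.
apply/cvgrPdist_lt => eps heps.
have eC : C = (complex.Re C)%:C by rewrite RRe_real // ger0_real.
have eE : eps = (complex.Re eps)%:C by rewrite RRe_real // ger0_real // ltW.
have he : 0 < complex.Re eps by rewrite -ltcR -eE.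
have hq : `|(2^-1 : R)| < 1 by rewrite ger0_norm ?invr_ge0 ?ler0n // invf_lt1 ?ltr0n // ltr1n.
have := cvg_geometric (complex.Re C) hq.
move/cvgr0_norm_lt => /(_ _ he).
apply: filterS => N hN.
rewrite distrC; apply: le_lt_trans (hb N) _.
rewrite eC eE.
have -> : (2^-1 : R[i]) = (2^-1 : R)%:C by rewrite fmorphV /= rmorph_nat.
rewrite -rmorphXn -rmorphM ltcR.
apply: le_lt_trans hN; rewrite /geometric /=.
exact: ler_norm.
Qed.

Theorem mainTheorem3 (R : realType) (y s : nat) (a b : R[i] -> R[i]) :
  (1 <= y)%N ->
  (\forall z \near (0 : R[i])^',
      [/\ a z ^+ (y + 2) - 2 * a z ^+ 2 + z = 0,
          b z ^+ (y + 2) - 2 * b z ^+ 2 + z = 0 & a z != b z]) ->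
  a z @[z --> (0 : R[i])^'] --> (0 : R[i]) ->
  b z @[z --> (0 : R[i])^'] --> (0 : R[i]) ->
  \forall z \near (0 : R[i])^',
     Fpartial y s z @ \oo -->
       ((1 - b z) * a z ^+ s + (a z - 1) * b z ^+ s) / (a z - b z)
     /\ (s = 2%N ->
         ((1 - b z) * a z ^+ s + (a z - 1) * b z ^+ s) / (a z - b z)
           = a z + b z - a z * b z).
Proof.
move=> hy hroots ha hb.
have h2 : (0 : R[i]) < 2^-1 by rewrite invr_gt0 ltr0n.
have h256 : (0 : R[i]) < 256^-1 by rewrite invr_gt0 ltr0n.
have hA := cvgr0_norm_le _ ha _ h2.
have hB := cvgr0_norm_le _ hb _ h2.
have hZ := @dnbhs0_le _ R[i] _ h256.
near=> z.
have [hra hrb hab] : [/\ a z ^+ (y + 2) - 2 * a z ^+ 2 + z = 0,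
          b z ^+ (y + 2) - 2 * b z ^+ 2 + z = 0 & a z != b z] by near: z.
have hza : `|a z| <= 2^-1 by near: z; apply: hA; exact: _.
have hzb : `|b z| <= 2^-1 by near: z; apply: hB; exact: _.
have hz : `|z| <= 256^-1 by near: z; exact: hZ.
move: hra hrb hab hza hzb; set A := a z; set B := b z => hra hrb hab hza hzb.
have hab' : A - B != 0 by rewrite subr_eq0.
split; last first.
  move=> ->; apply/eqP; rewrite -subr_eq0; apply/eqP; field; exact: hab'.
have hz8 : `|z| <= 8^-1.
  apply: le_trans hz _; rewrite lef_pV2 ?ler_nat // qualifE /= ltr0n //.
set L := _ / _.
have q0 : (0 : R[i]) <= 2^-1 by rewrite ltW.
have q1 : (2^-1 : R[i]) <= 1 by rewrite invf_le1 ?ler1n ?ltr0n.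
set K := (`|1 - B| + `|A - 1|) / `|A - B|.
rewrite -cvg_shiftS; apply: (@cvg_bound R _ _ (2 + K)) => N /=.
have eH : \sum_(n < N.+1) Hrec y z n s - L =
    - ((1 - B) * Srec y A z N s + (A - 1) * Srec y B z N s) / (A - B).
  have eA : \sum_(n < N.+1) Arec y A z n s = A ^+ s - Srec y A z N s.
    by rewrite -(@mart _ y A z hra N s) addrK.
  have eB : \sum_(n < N.+1) Arec y B z n s = B ^+ s - Srec y B z N s.
    by rewrite -(@mart _ y B z hrb N s) addrK.
  have eS : \sum_(n < N.+1) Hrec y z n s =
     ((1 - B) * (A ^+ s - Srec y A z N s) + (A - 1) * (B ^+ s - Srec y B z N s)) / (A - B).
    apply: (mulfI hab'); rewrite mulr_sumr.
    under eq_bigr => n _ do rewrite Hcomb.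
    rewrite big_split /= -!mulr_sumr eA eB.
    by field.
  rewrite eS /L; by field.
have hK : `|\sum_(n < N.+1) Hrec y z n s - L| <= K * (2^-1) ^+ N.
  rewrite eH normrM normrN normfV /K mulrAC; apply: ler_wpM2r.
    by rewrite invr_ge0 normr_ge0.
  apply: le_trans; first exact: (ler_normD ((1 - B) * Srec y A z N s) ((A - 1) * Srec y B z N s)).
  rewrite (normrM (1 - B)) (normrM (A - 1)) (mulrDl `|1 - B| `|A - 1|).
  have hsN : (2^-1 : R[i]) ^+ (s + N) <= (2^-1) ^+ N by apply: ler_wiXn2l => //; lia.
  apply: lerD; apply: ler_wpM2l; rewrite ?normr_ge0 //; apply: le_trans hsN;
    exact: Sbound.
apply: le_trans (_ : `|Fpartial y s z N.+1 - \sum_(n < N.+1) Hrec y z n s| +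
   `|\sum_(n < N.+1) Hrec y z n s - L| <= _).
  by rewrite -[X in `|X - L|](subrK (\sum_(n < N.+1) Hrec y z n s)) -addrA ler_normD.
rewrite mulrDl; apply: lerD => //; exact: diff_bound.
Unshelve. all: by end_near.
Qed.
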